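(* Let $k\in\mathbb{N}$, let $f^{(0)}_n,f^{(1)}_n,\dots,f^{(k+1)}_n$ be functions of $n\in\mathbb{Z}$, fix $n_1,\dots,n_{k+1}\in\mathbb{Z}$, and let $$F_n=\sum_{j=1}^{k+1}(-1)^{k+1+j}f^{(j)}_n\int_{n_j}^{n}f^{(0)}_s\,\mathrm{Wr}_s\big(f^{(1)}_s,\dots,\widehat{f^{(j)}_s},\dots,f^{(k+1)}_s\big)\,d\mu_{\mathrm{d}}(s),$$ where the hatted term is omitted. Then $$\mathrm{Wr}_n\big(f^{(1)}_n,\dots,f^{(k)}_n,F_n\big)=\int_{n_{k+1}}^{n-1}f^{(0)}_s\,\mathrm{Wr}_s\big(f^{(1)}_s,\dots,f^{(k)}_s\big)\,d\mu_{\mathrm{d}}(s)\;\cdot\;\mathrm{Wr}_n\big(f^{(1)}_n,\dots,f^{(k+1)}_n\big).$$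
   Context: Discrete Wronskian: $\mathrm{Wr}_n(g^{(1)}_n,\dots,g^{(m)}_n)=\det\big(g^{(i)}_{n-j+1}\big)_{1\le i,j\le m}$. Discrete integral: for $m,n\in\mathbb{Z}$ and a function $f$ on $\mathbb{Z}$, $\int_m^n f(s)\,d\mu_{\mathrm{d}}(s)=\sum_{s=m+1}^n f(s)$ if $n>m$, $=0$ if $n=m$, and $=-\sum_{s=n+1}^{m}f(s)$ if $n<m$. *)

(* Defs.v *)
From HB Require Import structures.
From mathcomp Require Import all_boot all_order all_algebra.
Set Implicit Arguments. Unset Strict Implicit. Unset Printing Implicit Defensive.
Import Order.TTheory GRing.Theory Num.Theory.
Local Open Scope ring_scope.

(* Discrete Wronskian of m functions g 0, ..., g (m-1) : int -> R at n:
   Wr_n = det (g i (n - j))_{0 <= i, j < m}  (= det(g^{(i)}_{n-j+1})_{1<=i,j<=m}). *)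
Definition dWr (R : comNzRingType) (m : nat) (g : nat -> int -> R) (n : int) : R :=
  \det (\matrix_(i < m, j < m) g i (n - (j : nat)%:Z)).

Definition dint (R : comNzRingType) (m n : int) (f : int -> R) : R :=
  if (m <= n)%R then \sum_(i < `|n - m|%N) f (m + 1 + (i : nat)%:Z)
  else - \sum_(i < `|m - n|%N) f (n + 1 + (i : nat)%:Z).

(* Here the summation index jj = j - 1 ranges over 0..k; the Wronskian of the
   family with f^{(j)} omitted takes, at position i (0 <= i < k), the function
   f^{(i+1)} if i+1 < j and f^{(i+2)} otherwise. *)
Definition Fn (R : comNzRingType) (k : nat) (f : nat -> int -> R) (nn : nat -> int)
  (n : int) : R :=
  \sum_(jj < k.+1)
     (-1) ^+ (k.+1 + jj.+1) * f jj.+1 n *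
     dint (nn jj.+1) n
       (fun s => f 0%N s *
          dWr k (fun i => f (if (i < jj)%N then i.+1 else i.+2)) s).

(* Main.v *)
Require Import Defs.
From HB Require Import structures.
From mathcomp Require Import all_boot all_order all_algebra zify ring.
Set Implicit Arguments. Unset Strict Implicit. Unset Printing Implicit Defensive.
Import Order.TTheory GRing.Theory Num.Theory.
Local Open Scope ring_scope.

Lemma dint_step (R : comNzRingType) (a y : int) (g : int -> R) :
  dint a (y + 1) g = dint a y g + g (y + 1).
Proof.
rewrite /dint.
have [[m ->]|[m ->]] : (exists m : nat, y = a + m%:Z) \/ (exists m : nat, y = a - m.+1%:Z).
  case: (lerP a y) => h; [left; exists `|y - a|%N | right; exists `|y - a|%N.-1]; lia.
- have -> : (a <= a + m%:Z + 1) = true by lia.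
  have -> : (a <= a + m%:Z) = true by lia.
  have -> : absz (a + m%:Z + 1 - a)%R = m.+1 by lia.
  have -> : absz (a + m%:Z - a)%R = m by lia.
  rewrite big_ord_recr /=; congr (_ + g _); lia.
- case: m => [|m].
    have -> : (a <= a - 1%:Z + 1) = true by lia.
    have -> : (a <= a - 1%:Z) = false by lia.
    have -> : absz (a - 1%:Z + 1 - a)%R = 0%N by lia.
    have -> : absz (a - (a - 1%:Z))%R = 1%N by lia.
    rewrite big_ord0 big_ord1 /=; have -> : a - 1%:Z + 1 + 0%:Z = a - 1%:Z + 1 by lia.
    by rewrite addNr.
  have -> : (a <= a - m.+2%:Z + 1) = false by lia.
  have -> : (a <= a - m.+2%:Z) = false by lia.
  have -> : absz (a - (a - m.+2%:Z + 1))%R = m.+1 by lia.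
  have -> : absz (a - (a - m.+2%:Z))%R = m.+2 by lia.
  rewrite [X in _ = - X + _]big_ord_recl opprD addrAC.
  have -> : a - m.+2%:Z + 1 + 0%:Z = a - m.+2%:Z + 1 by lia.
  rewrite (addrAC (- g _)) addNr add0r; congr (- _); apply: eq_bigr => i _; congr g; rewrite /= (_ : bump 0 i = i.+1) //; lia.
Qed.
Lemma D_expand (R : comNzRingType) (k : nat) (f : nat -> int -> R) (x s : int) :
  \sum_(jj < k.+1) (-1) ^+ (k.+1 + jj.+1) * f jj.+1 x *
     dWr k (fun i => f (if (i < jj)%N then i.+1 else i.+2)) s =
  \det (\matrix_(i < k.+1, j < k.+1) f i.+1 (if (j < k)%N then s - (j : nat)%:Z else x)).
Proof.
rewrite (expand_det_col _ ord_max); apply: eq_bigr => i _.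
rewrite mxE /cofactor /= ltnn.
rewrite [_ * f _ _]mulrC -mulrA; congr (_ * (_ * _)).
  by rewrite addSn addnS !exprS mulrA mulrNN !mul1r addnC.
rewrite /dWr; apply: congr1; apply/matrixP => a b; rewrite !mxE /=.
have hb : bump k b = b by rewrite /bump leqNgt (ltn_ord b).
rewrite hb (ltn_ord b) /bump.
case: (ltnP a i) => h.
  by [].
by [].
Qed.

Lemma dint_iter (R : comNzRingType) (a y : int) (g : int -> R) (c : nat) :
  dint a (y + c%:Z) g = dint a y g + \sum_(t < c) g (y + 1 + t%:Z).
Proof.
elim: c => [|c IH]; first by rewrite addr0 big_ord0 addr0.
have -> : y + c.+1%:Z = (y + c%:Z) + 1 by lia.
rewrite dint_step IH big_ord_recr /= addrA; congr (_ + g _); lia.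
Qed.

Lemma Dzero (R : comNzRingType) (k : nat) (f : nat -> int -> R) (s : int) (d : nat) :
  (d < k)%N ->
  \sum_(jj < k.+1) (-1) ^+ (k.+1 + jj.+1) * f jj.+1 (s - d%:Z) *
     dWr k (fun i => f (if (i < jj)%N then i.+1 else i.+2)) s = 0.
Proof.
move=> hd; rewrite D_expand -det_tr.
have hd' : (d < k.+1)%N by apply: ltnW.
apply: (@determinant_alternate _ _ _ (Ordinal hd') ord_max).
  by rewrite -val_eqE /= neq_ltn hd.
by move=> j; rewrite !mxE /= hd ltnn.
Qed.

Lemma Dzero' (R : comNzRingType) (k : nat) (f : nat -> int -> R) (x s : int) (d : nat) :
  (d < k)%N -> x = s - d%:Z ->
  \sum_(jj < k.+1) (-1) ^+ (k.+1 + jj.+1) * f jj.+1 x *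
     dWr k (fun i => f (if (i < jj)%N then i.+1 else i.+2)) s = 0.
Proof. by move=> hd ->; apply: Dzero. Qed.

Lemma sum_cancel (R : comNzRingType) (K T : nat) (a I : nat -> R) (h : nat -> nat -> R) :
  (forall t, (t < T)%N -> \sum_(jj < K) a jj * h jj t = 0) ->
  \sum_(jj < K) a jj * (I jj - \sum_(t < T) h jj t) = \sum_(jj < K) a jj * I jj.
Proof.
move=> H; under eq_bigr do rewrite mulrBr.
rewrite sumrB.
under [X in _ - X]eq_bigr do rewrite mulr_sumr.
rewrite exchange_big /= [X in _ - X]big1 ?subr0 // => t _; exact: (H t (ltn_ord t)).
Qed.

Lemma pull (R : comNzRingType) (k : nat) (f : nat -> int -> R) (x s : int) :
  \sum_(jj < k.+1) (-1) ^+ (k.+1 + jj.+1) * f jj.+1 x *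
     (f 0%N s * dWr k (fun i => f (if (i < jj)%N then i.+1 else i.+2)) s) =
  f 0%N s * \sum_(jj < k.+1) (-1) ^+ (k.+1 + jj.+1) * f jj.+1 x *
     dWr k (fun i => f (if (i < jj)%N then i.+1 else i.+2)) s.
Proof. rewrite mulr_sumr; apply: eq_bigr => jj _; ring. Qed.

Lemma Fn_row (R : comNzRingType) (k : nat) (f : nat -> int -> R)
  (nn : nat -> int) (n : int) (c : nat) (hk : (0 < k)%N) (hc : (c <= k)%N) :
  Fn k f nn (n - c%:Z) =
  \sum_(jj < k.+1) (-1) ^+ (k.+1 + jj.+1) * f jj.+1 (n - c%:Z) *
     dint (nn jj.+1) (n - 1)
       (fun s => f 0%N s * dWr k (fun i => f (if (i < jj)%N then i.+1 else i.+2)) s).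
Proof.
rewrite /Fn; case: c hc => [|c] hc.
  have E : forall a (g : int -> R), dint a (n - 0%:Z) g = dint a (n - 1) g - \sum_(t < 1) (- g n).
    move=> a g; rewrite big_ord1 opprK.
    have -> : n - 0%:Z = (n - 1) + 1 by lia.
    by rewrite dint_step subrK.
  under eq_bigr do rewrite E.
  apply: (@sum_cancel R k.+1 1 (fun jj => (-1) ^+ (k.+1 + jj.+1) * f jj.+1 (n - 0%:Z))
    (fun jj => dint (nn jj.+1) (n - 1) (fun s => f 0%N s * dWr k (fun i => f (if (i < jj)%N then i.+1 else i.+2)) s))
    (fun jj t => - (f 0%N n * dWr k (fun i => f (if (i < jj)%N then i.+1 else i.+2)) n))) => t _.
  under eq_bigr do rewrite mulrN.
  rewrite sumrN pull.
  have -> : n = n - 0%:Z by rewrite subr0.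
  by rewrite (Dzero _ _ hk) mulr0 oppr0.
have E : forall a (g : int -> R), dint a (n - c.+1%:Z) g =
   dint a (n - 1) g - \sum_(t < c) g (n - c.+1%:Z + 1 + t%:Z).
  move=> a g; have -> : n - 1 = (n - c.+1%:Z) + c%:Z by lia.
  by rewrite dint_iter addrK.
under eq_bigr do rewrite E.
apply: (@sum_cancel R k.+1 c (fun jj => (-1) ^+ (k.+1 + jj.+1) * f jj.+1 (n - c.+1%:Z))
    (fun jj => dint (nn jj.+1) (n - 1) (fun s => f 0%N s * dWr k (fun i => f (if (i < jj)%N then i.+1 else i.+2)) s))
    (fun jj t => f 0%N (n - c.+1%:Z + 1 + t%:Z) * dWr k (fun i => f (if (i < jj)%N then i.+1 else i.+2)) (n - c.+1%:Z + 1 + t%:Z))) => t ht.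

rewrite pull.
rewrite (@Dzero' _ _ _ _ (n - c.+1%:Z + 1 + t%:Z) t.+1) ?mulr0 //; lia.
Qed.

Lemma eq_dint (R : comNzRingType) (a b : int) (g1 g2 : int -> R) :
  (forall s, g1 s = g2 s) -> dint a b g1 = dint a b g2.
Proof.
move=> H; rewrite /dint; case: ifP => _; last congr (- _);
  by apply: eq_bigr => i _; rewrite H.
Qed.

Theorem lemma4p2 (R : comNzRingType) (k : nat) (f : nat -> int -> R)
  (nn : nat -> int) (n : int) (hk : (0 < k)%N) :
  dWr k.+1 (fun i => if (i < k)%N then f i.+1 else Fn k f nn) n =
  dint (nn k.+1) (n - 1) (fun s => f 0%N s * dWr k (fun i => f i.+1) s)
    * dWr k.+1 (fun i => f i.+1) n.
Proof.
pose I (jj : nat) := dint (nn jj.+1) (n - 1)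
       (fun s => f 0%N s * dWr k (fun i => f (if (i < jj)%N then i.+1 else i.+2)) s).
pose M := \matrix_(i < k.+1, l < k.+1)
  (if (i < k)%N then (i == l)%:R else (-1) ^+ (k.+1 + l.+1) * I l : R).
pose B := \matrix_(i < k.+1, j < k.+1) f i.+1 (n - (j : nat)%:Z).
have HA : \matrix_(i < k.+1, j < k.+1)
   (if (i < k)%N then f i.+1 else Fn k f nn) (n - (j : nat)%:Z) = M *m B.
  apply/matrixP => i j; rewrite !mxE.
  case: ifP => hi.
    rewrite (bigD1 i) //= !mxE hi eqxx mul1r big1 ?addr0 // => l hl.
    by rewrite !mxE hi eq_sym (negPf hl) mul0r.
  rewrite (Fn_row _ _ _ hk (_ : (j <= k)%N)) ?leq_ord //.
  apply: eq_bigr => l _; rewrite !mxE hi; exact: mulrAC.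
rewrite /dWr HA det_mulmx det_trig; last first.
  apply/is_trig_mxP => i j hij; rewrite mxE.
  case: ifP => hi; first by rewrite (_ : (i == j) = false) //; apply/negbTE; rewrite -val_eqE /= neq_ltn hij.
  by have := ltn_ord j; have := hi; lia.
rewrite big_ord_recr /= big1 => [|i _]; last by rewrite mxE (ltn_ord i) eqxx.
rewrite mxE ltnn mul1r addnn -muln2 exprM sqrr_sign mul1r; congr (_ * _).
rewrite /I; apply: eq_dint => s; congr (_ * _); rewrite /dWr; apply: congr1.
by apply/matrixP => a b; rewrite !mxE (ltn_ord a).
Qed.
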